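(* Assume $a^2\rho(\mathbf P_1\mathbf E)<1$. For every $\theta\in\mathbb N$, every reception index $j$, every $\gamma_{S_j}\in\{1,\dots,n\}$ and every value $x_{S_j}\in\mathbb R$, the performance-evaluation function satisfies $\mathcal J_{S_j}^\theta\le\mathcal R_j(\theta)$, where $$\mathcal R_j(\theta):=\big[\tilde g_\theta(\bar a^2,\gamma_{S_j})-\tilde g_\theta(c^2,\gamma_{S_j})\big]\frac{B}{c^{2\theta}}+\bar M\big[\tilde g_\theta(a^2,\gamma_{S_j})-\tilde g_\theta(1,\gamma_{S_j})\big],$$ with $\tilde g_\theta(b,\gamma):=b^\theta\,\mathbf d^T(\mathbf I-b\mathbf P_1\mathbf E)^{-1}\mathbf P_0^{\theta-1}\mathbf P_1\boldsymbol\delta_\gamma$.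
   Context: Setup. Fix reals $a,L$ with $|a|>1$ and $\bar a:=a+L$ satisfying $0<\bar a^2<1$; fix $c$ with $\bar a^2<c^2<1$, $M>0$, $B>0$, and $\bar M:=M/(a^2-1)$. Plant $x_{k+1}=ax_k+u_k+v_k$, $v_k$ i.i.d., mean $0$, variance $M$, independent of everything else. Sensor decisions $t_k\in\{0,1\}$, receptions $r_k\in\{0,1\}$ ($r_k=0$ if $t_k=0$). Controller $u_k=L\hat x_k^+$, $\hat x_k:=\bar a\hat x_{k-1}^+$, $\hat x_k^+:=x_k$ if $r_k=1$, else $\hat x_k$. Channel state $\gamma_k\in\{1,\dots,n\}$ with $\Pr[\gamma_{k+1}=i\mid\gamma_k=j,t_k=\ell]=(\mathbf P_\ell)_{ij}$, $\mathbf P_0,\mathbf P_1$ column-stochastic; drop probabilities $\mathbf e\in[0,1]^n$ (if $t_k=1$, $r_k=1$ w.p. $1-e_{\gamma_k}$); $\mathbf E:=\mathrm{diag}(\mathbf e)$, $\mathbf d:=\mathbf 1-\mathbf e$, $\mathbf P^0:=\mathbf I$, $\boldsymbol\delta_i$ standard basis vectors, $\rho$ spectral radius. $r_0=1$; $R_k:=\max\{i<k:r_i=1\}$; $S_0:=0$, $S_{j+1}:=\min\{k>S_j:r_k=1\}$. $I_k^+$ denotes the sensor's post-transmission information at time $k$, which at a reception time $S_j$ consists of $x_{S_j}$, $z^+_{S_j}=0$, $S_j$ and $\gamma_{S_j}$. Performance function $h_k:=x_k^2-\max\{c^{2(k-R_k)}x_{R_k}^2,B\}$. Nominal policy $\mathcal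 T_k^D$: $t_i=0$ for $k\le i\le k+D-1$, $t_i=1$ for $i\ge k+D$. Performance-evaluation function: $\mathcal J_{S_j}^\theta:=\mathbb E_{\mathcal T^{\theta-1}_{S_j+1}}[h_{S_{j+1}}\mid I_{S_j}^+]=\sum_{w\ge\theta}H(w,x_{S_j}^2)\,\mathbf d^T(\mathbf P_1\mathbf E)^{w-\theta}\mathbf P_0^{\theta-1}\mathbf P_1\boldsymbol\delta_{\gamma_{S_j}}$, where $H(w,y):=\bar a^{2w}y+\bar M(a^{2w}-1)-\max\{c^{2w}y,B\}$. *)

(* Defs.v *)
(* classical reals, matrices as functions on indices 0..n-1. *)
From Stdlib Require Import Reals Lra ClassicalEpsilon.
Open Scope R_scope.

Fixpoint fsum (n : nat) (f : nat -> R) : R :=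
  match n with O => 0 | S m => fsum m f + f m end.

Definition vec := nat -> R.
Definition mat := nat -> nat -> R.

Definition mid : mat := fun i j => if Nat.eqb i j then 1 else 0.
Definition mdiag (v : vec) : mat := fun i j => if Nat.eqb i j then v i else 0.
Definition mmul (n : nat) (A B : mat) : mat :=
  fun i j => fsum n (fun k => A i k * B k j).
Definition msub (A B : mat) : mat := fun i j => A i j - B i j.
Definition mscale (b : R) (A : mat) : mat := fun i j => b * A i j.
Fixpoint mpow (n : nat) (A : mat) (k : nat) : mat :=
  match k with O => mid | S k' => mmul n A (mpow n A k') end.

Definition is_minv (n : nat) (A X : mat) : Prop :=
  (forall i j, (i < n)%nat -> (j < n)%nat -> mmul n A X i j = mid i j) /\
  (forall i j, (i < n)%nat -> (j < n)%nat -> mmul n X A i j = mid i j).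

(* the inverse matrix (chosen by classical choice; unique when it exists) *)
Definition minv (n : nat) (A : mat) : mat :=
  epsilon (inhabits mid) (fun X => is_minv n A X).

Definition col_stochastic (n : nat) (P : mat) : Prop :=
  (forall i j, (i < n)%nat -> (j < n)%nat -> 0 <= P i j) /\
  (forall j, (j < n)%nat -> fsum n (fun i => P i j) = 1).

(* re + i im is a (complex) eigenvalue of the real n x n matrix A:
   there is a nonzero complex vector x + i y with A(x+iy) = (re+i im)(x+iy). *)
Definition ceigen (n : nat) (A : mat) (re im : R) : Prop :=
  exists x y : vec,
    (exists i, (i < n)%nat /\ (x i <> 0 \/ y i <> 0)) /\
    (forall i, (i < n)%nat ->
       fsum n (fun k => A i k * x k) = re * x i - im * y i /\
       fsum n (fun k => A i k * y k) = im * x i + re * y i).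

Definition dTMdelta (n : nat) (d : vec) (Mx : mat) (g : nat) : R :=
  fsum n (fun i => d i * Mx i g).

Definition Hfun (abar a c Mbar B : R) (w : nat) (y : R) : R :=
  abar ^ (2 * w) * y + Mbar * (a ^ (2 * w) - 1) - Rmax (c ^ (2 * w) * y) B.

(* term w = theta + k of the series defining J^theta *)
Definition Jterm (n : nat) (abar a c Mbar B : R) (P0 P1 : mat) (e : vec)
    (theta : nat) (y : R) (g : nat) (k : nat) : R :=
  let d := fun i => 1 - e i in
  let P1E := mmul n P1 (mdiag e) in
  Hfun abar a c Mbar B (theta + k) y *
  dTMdelta n d (mmul n (mpow n P1E k) (mmul n (mpow n P0 (theta - 1)) P1)) g.

Definition gtilde (n : nat) (P0 P1 : mat) (e : vec) (theta : nat) (b : R) (g : nat) : R :=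
  let d := fun i => 1 - e i in
  let P1E := mmul n P1 (mdiag e) in
  b ^ theta *
  dTMdelta n d (mmul n (minv n (msub mid (mscale b P1E)))
                       (mmul n (mpow n P0 (theta - 1)) P1)) g.

(* Main.v *)
Require Import Defs.
From Stdlib Require Import Reals Lra Lia Psatz Classical.
From Coquelicot Require Import Coquelicot.
Open Scope R_scope.

Module BridgeM.
From mathcomp Require Import all_boot all_algebra.
From mathcomp Require Import Rstruct.
Import GRing.Theory.

Lemma fsum_big n (f : nat -> R) : fsum n f = (\sum_(i < n) f i)%R.
Proof.
elim: n => [|m IH] /=; first by rewrite big_ord0.
by rewrite big_ord_recr /= IH.
Qed.

Lemma inv_exists n (M : mat) :
  (forall u : vec, (forall i, Peano.lt i n -> fsum n (fun k => M i k * u k) = 0) ->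
     forall i, Peano.lt i n -> u i = 0) -> exists X, is_minv n M X.
Proof.
case: n => [|m] Hinj.
  by exists mid; split => i j Hi; case: (Nat.nlt_0_r _ Hi).
set Mm := (@matrix_of_fun R m.+1 m.+1 matrix_key (fun i j => M i j)) : 'M[R]_m.+1.
have Hu : Mm \in unitmx.
  rewrite unitmxE unitfE; apply/negP => /eqP H0.
  have : (\det Mm^T == 0)%R by rewrite det_tr H0.
  move/det0P => [v vn0 Hv].
  move/negP: vn0; apply; apply/eqP/rowP => k.
  have Hk := Hinj (fun k => if (k < m.+1)%N =P true is ReflectT p then v ord0 (Ordinal p) else 0).
  have Hpre : forall i, Peano.lt i m.+1 -> fsum m.+1 (fun k0 => M i k0 *
      (if (k0 < m.+1)%N =P true is ReflectT p then v ord0 (Ordinal p) else 0)) = 0.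
    move=> i /ltP Hi; rewrite fsum_big.
    have := congr1 (fun A : 'rV_m.+1 => A ord0 (Ordinal Hi)) Hv.
    rewrite !mxE => H; apply: (etrans _ H); apply: eq_bigr => j _.
    rewrite !mxE mulrC; congr (_ * _)%R.
    case: eqP => [p|]; last by rewrite ltn_ord.
    by congr (v _ _); apply/val_inj.
  have := Hk Hpre k (elimT ltP (ltn_ord k)).
  case: eqP => [p|]; last by rewrite ltn_ord.
  move=> H; rewrite mxE (_ : k = Ordinal p); [exact: H | exact/val_inj].
set Xm := invmx Mm.
exists (fun i j => Xm (inord i) (inord j)).
split => i j /ltP Hi /ltP Hj; rewrite /mmul fsum_big.
- have Hmid : mid i j = ((inord i : 'I_m.+1) == inord j)%:R%R.
    rewrite /mid; case: Nat.eqb_spec => [->|ne]; first by rewrite eqxx.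
    by case: eqP => // /(congr1 val) /=; rewrite !inordK // => /ne.
  have := congr1 (fun A : 'M_m.+1 => A (inord i) (inord j)) (mulmxV Hu).
  rewrite !mxE Hmid => <-.
  apply: eq_bigr => k _; rewrite !mxE inordK // inord_val //.
- have Hmid : mid i j = ((inord i : 'I_m.+1) == inord j)%:R%R.
    rewrite /mid; case: Nat.eqb_spec => [->|ne]; first by rewrite eqxx.
    by case: eqP => // /(congr1 val) /=; rewrite !inordK // => /ne.
  have := congr1 (fun A : 'M_m.+1 => A (inord i) (inord j)) (mulVmx Hu).
  rewrite !mxE Hmid => <-.
  apply: eq_bigr => k _; rewrite !mxE inordK // inord_val //.
Qed.
End BridgeM.

Lemma fsum_ext n f g : (forall i, (i < n)%nat -> f i = g i) -> fsum n f = fsum n g.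
Proof. induction n; simpl; intros H; auto. rewrite IHn by (intros; apply H; lia). rewrite H by lia. auto. Qed.

Lemma fsum_plus n f g : fsum n (fun i => f i + g i) = fsum n f + fsum n g.
Proof. induction n; simpl; [lra|]. rewrite IHn. lra. Qed.

Lemma fsum_minus n f g : fsum n (fun i => f i - g i) = fsum n f - fsum n g.
Proof. induction n; simpl; [lra|]. rewrite IHn. lra. Qed.

Lemma fsum_scal n c f : fsum n (fun i => c * f i) = c * fsum n f.
Proof. induction n; simpl; [lra|]. rewrite IHn. lra. Qed.

Lemma fsum_zero n : fsum n (fun _ => 0) = 0.
Proof. induction n; simpl; [lra|]. rewrite IHn. lra. Qed.

Lemma fsum_le n f g : (forall i, (i < n)%nat -> f i <= g i) -> fsum n f <= fsum n g.
Proof. induction n; simpl; intros H; [lra|]. assert (f n <= g n) by (apply H; lia).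
 assert (fsum n f <= fsum n g) by (apply IHn; intros; apply H; lia). lra. Qed.

Lemma fsum_nonneg n f : (forall i, (i < n)%nat -> 0 <= f i) -> 0 <= fsum n f.
Proof. intros H. rewrite <- (fsum_zero n). apply fsum_le. auto. Qed.

Lemma fsum_term_le n f i : (forall i, (i < n)%nat -> 0 <= f i) -> (i < n)%nat -> f i <= fsum n f.
Proof. induction n; simpl; intros H Hi; [lia|].
 assert (0 <= fsum n f) by (apply fsum_nonneg; intros; apply H; lia).
 destruct (Nat.eq_dec i n) as [->|ne]. lra.
 assert (f i <= fsum n f) by (apply IHn; [intros; apply H; lia| lia]).
 assert (0 <= f n) by (apply H; lia). lra. Qed.

Lemma fsum_swap n m (f : nat -> nat -> R) :
  fsum n (fun i => fsum m (fun j => f i j)) = fsum m (fun j => fsum n (fun i => f i j)).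
Proof. induction n; simpl. symmetry; apply fsum_zero.
 rewrite IHn. rewrite <- fsum_plus. auto. Qed.

Lemma fsum_mid n i u : (i < n)%nat -> fsum n (fun k => mid i k * u k) = u i.
Proof. induction n; intros Hi; simpl; [lia|]. unfold mid at 2.
 destruct (Nat.eqb_spec i n) as [->|ne].
 - rewrite (fsum_ext n _ (fun _ => 0)). rewrite fsum_zero. lra.
   intros k Hk. unfold mid. destruct (Nat.eqb_spec n k). lia. lra.
 - rewrite IHn by lia. lra. Qed.

Lemma fsum_mid_l n j u : (j < n)%nat -> fsum n (fun k => u k * mid k j) = u j.
Proof. intros Hj. rewrite <- (fsum_mid n j u Hj). apply fsum_ext. intros k _.
 unfold mid. destruct (Nat.eqb_spec k j), (Nat.eqb_spec j k); try lia; lra. Qed.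

Lemma fsum_abs n f : Rabs (fsum n f) <= fsum n (fun i => Rabs (f i)).
Proof. induction n; simpl. rewrite Rabs_R0; lra.
 eapply Rle_trans. apply Rabs_triang. lra. Qed.

Lemma fin_pos_min n (h : nat -> R) : (forall i, (i < n)%nat -> 0 < h i) ->
  exists m, 0 < m /\ forall i, (i < n)%nat -> m <= h i.
Proof. induction n; intros H. exists 1; split; [lra| intros; lia].
 destruct IHn as [m [Hm Hm2]]. intros; apply H; lia.
 exists (Rmin m (h n)). split. apply Rmin_glb_lt; auto.
 intros i Hi. destruct (Nat.eq_dec i n) as [->|ne]. apply Rmin_r.
 eapply Rle_trans. apply Rmin_l. apply Hm2; lia. Qed.

Lemma fin_max n (h : nat -> R) : exists M, forall i, (i < n)%nat -> h i <= M.
Proof. induction n. exists 0; intros; lia.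
 destruct IHn as [M HM]. exists (Rmax M (h n)). intros i Hi.
 destruct (Nat.eq_dec i n) as [->|ne]. apply Rmax_r.
 eapply Rle_trans. apply HM; lia. apply Rmax_l. Qed.

Lemma fin_argmin n (h : nat -> R) : (1 <= n)%nat ->
  exists i0, (i0 < n)%nat /\ forall i, (i < n)%nat -> h i0 <= h i.
Proof. induction n; intros Hn. lia.
 destruct (Nat.eq_dec n 0) as [->|ne]. exists 0%nat. split. lia. intros i Hi. assert (i = 0%nat) by lia. subst; lra.
 destruct IHn as [i0 [Hi0 H0]]. lia.
 destruct (Rle_lt_dec (h i0) (h n)).
 - exists i0. split. lia. intros i Hi. destruct (Nat.eq_dec i n) as [->|ne2]. auto. apply H0; lia.
 - exists n. split. lia. intros i Hi. destruct (Nat.eq_dec i n) as [->|ne2]. lra.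
   specialize (H0 i ltac:(lia)). lra. Qed.

Lemma le_div_mul a b c : 0 < b -> a <= c / b -> a * b <= c.
Proof. intros Hb H. apply Rmult_le_compat_r with (r := b) in H; [|lra].
 replace (c / b * b) with c in H by (field; lra). auto. Qed.
Lemma lt_div_mul a b c : 0 < b -> a < c / b -> a * b < c.
Proof. intros Hb H. apply Rmult_lt_compat_r with (r := b) in H; [|lra].
 replace (c / b * b) with c in H by (field; lra). auto. Qed.

Definition mv (n : nat) (A : mat) (u : vec) : vec := fun i => fsum n (fun k => A i k * u k).

Section Perron.
Variable n : nat.
Variable A : mat.
Variable beta : R.
Hypothesis HA : forall i j, (i < n)%nat -> (j < n)%nat -> 0 <= A i j.
Hypothesis Hinv : forall t, 0 <= t <= beta ->
  exists X, is_minv n (fun i j => mid i j - t * A i j) X.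

Definition good (t : R) := exists v : vec, (forall i, (i < n)%nat -> 0 < v i) /\
  forall i, (i < n)%nat -> t * mv n A v i < v i.

Lemma mv_nonneg v : (forall i, (i < n)%nat -> 0 <= v i) -> forall i, (i < n)%nat -> 0 <= mv n A v i.
Proof. intros Hv i Hi. apply fsum_nonneg. intros k Hk. apply Rmult_le_pos; auto. Qed.

Lemma good0 : good 0.
Proof. exists (fun _ => 1). split; intros; lra. Qed.

Lemma good_down t t1 : 0 <= t1 <= t -> good t -> good t1.
Proof. intros Ht [v [Hv1 Hv2]]. exists v. split; auto. intros i Hi.
 assert (0 <= mv n A v i) by (apply mv_nonneg; auto; intros; apply Rlt_le; auto).
 specialize (Hv2 i Hi). nra. Qed.

Lemma good_open t : 0 <= t -> good t -> exists d, 0 < d /\ good (t + d).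
Proof. intros Ht [v [Hv1 Hv2]].
 assert (Hm : forall i, (i < n)%nat -> 0 <= mv n A v i) by (apply mv_nonneg; auto; intros; apply Rlt_le; auto).
 destruct (fin_pos_min n (fun i => (v i - t * mv n A v i) / (1 + mv n A v i))) as [d [Hd Hd2]].
 { intros i Hi. specialize (Hv2 i Hi). specialize (Hm i Hi). apply Rdiv_lt_0_compat; lra. }
 exists d. split; auto. exists v. split; auto. intros i Hi.
 specialize (Hd2 i Hi). specialize (Hv2 i Hi). specialize (Hm i Hi). simpl in Hd2.
 apply Rmult_le_compat_r with (r := 1 + mv n A v i) in Hd2; [|lra].
 unfold Rdiv in Hd2. rewrite Rmult_assoc, Rinv_l in Hd2 by lra. nra. Qed.

Lemma solve_pos t v w : 0 <= t -> (forall i, (i < n)%nat -> 0 < v i) ->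
  (forall i, (i < n)%nat -> t * mv n A v i < v i) ->
  (forall i, (i < n)%nat -> w i - t * mv n A w i = 1) ->
  forall i, (i < n)%nat -> 0 < w i.
Proof. intros Ht Hv1 Hv2 Hw i Hi.
 destruct (fin_argmin n (fun i => w i / v i)) as [i0 [Hi0 Hmin]]. lia.
 set (mu := w i0 / v i0) in *.
 assert (Hge : forall j, (j < n)%nat -> mu * v j <= w j).
 { intros j Hj. specialize (Hmin j Hj). specialize (Hv1 j Hj). simpl in Hmin.
   apply Rmult_le_compat_r with (r := v j) in Hmin; [|lra].
   unfold Rdiv in Hmin. rewrite Rmult_assoc, Rinv_l, Rmult_1_r in Hmin by lra. lra. }
 destruct (Rle_lt_dec mu 0) as [Hmu|Hmu].
 - exfalso.
   assert (Hr : 0 <= mv n A (fun j => w j - mu * v j) i0).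
   { apply mv_nonneg; auto. intros j Hj. specialize (Hge j Hj). lra. }
   assert (Hsplit : mv n A w i0 = mv n A (fun j => w j - mu * v j) i0 + mu * mv n A v i0).
   { unfold mv. rewrite <- fsum_scal, <- fsum_plus. apply fsum_ext. intros; ring. }
   specialize (Hw i0 Hi0). specialize (Hv2 i0 Hi0). specialize (Hv1 i0 Hi0).
   assert (Hw0 : w i0 = mu * v i0). { unfold mu. field. lra. }
   assert (0 <= t * mv n A (fun j => w j - mu * v j) i0) by (apply Rmult_le_pos; auto).
   assert (0 <= mu * (t * mv n A v i0 - v i0)) by nra.
   rewrite Hsplit in Hw. nra.
 - specialize (Hge i Hi). specialize (Hv1 i Hi). nra.
Qed.

Lemma fsum_const m c : fsum m (fun _ => c) = INR m * c.
Proof. induction m; simpl; [lra|]. rewrite IHm. destruct m; simpl; lra. Qed.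

Lemma mv_IA t u i : (i < n)%nat ->
  fsum n (fun k => (mid i k - t * A i k) * u k) = u i - t * mv n A u i.
Proof. intros Hi. rewrite (fsum_ext n _ (fun k => mid i k * u k - t * (A i k * u k))) by (intros; ring).
 rewrite fsum_minus, fsum_scal, fsum_mid by auto. reflexivity. Qed.

Lemma inv_solve t X : is_minv n (fun i j => mid i j - t * A i j) X ->
  forall i, (i < n)%nat -> (fun i => fsum n (fun k => X i k)) i - t * mv n A (fun i => fsum n (fun k => X i k)) i = 1.
Proof. intros [HL HR] i Hi.
 etransitivity; [symmetry; apply (mv_IA t (fun i => fsum n (fun k => X i k)) i Hi)|].
 transitivity (fsum n (fun l => fsum n (fun k => (mid i k - t * A i k) * X k l))).
 - rewrite fsum_swap. apply fsum_ext. intros k Hk. rewrite <- fsum_scal. reflexivity.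
 - rewrite (fsum_ext n _ (fun l => mid i l * 1)). apply fsum_mid; auto.
   intros l Hl. rewrite <- (HL i l Hi Hl). unfold mmul. ring.
Qed.

Lemma inv_repr t X : is_minv n (fun i j => mid i j - t * A i j) X ->
  forall u i, (i < n)%nat -> u i = fsum n (fun m => X i m * (u m - t * mv n A u m)).
Proof. intros [HL HR] u i Hi.
 rewrite (fsum_ext n _ (fun m => X i m * fsum n (fun l => (mid m l - t * A m l) * u l))).
 2:{ intros m Hm. rewrite mv_IA; auto. }
 rewrite (fsum_ext n _ (fun m => fsum n (fun l => X i m * ((mid m l - t * A m l) * u l)))).
 2:{ intros m Hm. rewrite <- fsum_scal. reflexivity. }
 rewrite fsum_swap. rewrite <- (fsum_mid n i u Hi). apply fsum_ext. intros l Hl.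
 rewrite <- (HR i l Hi Hl). unfold mmul. rewrite Rmult_comm, <- fsum_scal.
 apply fsum_ext. intros; ring.
Qed.

Lemma good_closed s : 0 < s <= beta ->
  (forall eps, 0 < eps -> exists t, s - eps < t <= s /\ 0 <= t /\ good t) -> good s.
Proof. intros Hs Happ.
 destruct (Hinv s ltac:(lra)) as [X HX].
 set (KX := fsum n (fun i => fsum n (fun m => Rabs (X i m))) + 1).
 set (KA := fsum n (fun i => fsum n (fun j => A i j)) + 1).
 set (Sn := INR n).
 assert (HKX0 : 0 <= fsum n (fun i => fsum n (fun m => Rabs (X i m)))).
 { apply fsum_nonneg; intros; apply fsum_nonneg; intros; apply Rabs_pos. }
 assert (HKA0 : 0 <= fsum n (fun i => fsum n (fun j => A i j))).
 { apply fsum_nonneg; intros; apply fsum_nonneg; intros; apply HA; auto. }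
 assert (HSn : 0 <= Sn) by apply pos_INR.
 assert (HrowX : forall i, (i < n)%nat -> fsum n (fun m => Rabs (X i m)) <= KX).
 { intros i Hi. unfold KX. pose proof (fsum_term_le n (fun i => fsum n (fun m => Rabs (X i m))) i) as H.
   simpl in H. assert (fsum n (fun m => Rabs (X i m)) <= fsum n (fun i => fsum n (fun m => Rabs (X i m)))).
   { apply H; auto. intros; apply fsum_nonneg; intros; apply Rabs_pos. } lra. }
 assert (HAle : forall i j, (i < n)%nat -> (j < n)%nat -> A i j <= KA).
 { intros i j Hi Hj. unfold KA.
   assert (A i j <= fsum n (fun j => A i j)).
   { apply (fsum_term_le n (fun j => A i j)); auto. }
   assert (fsum n (fun j => A i j) <= fsum n (fun i => fsum n (fun j => A i j))).
   { apply (fsum_term_le n (fun i => fsum n (fun j => A i j))); auto. intros; apply fsum_nonneg; intros; apply HA; auto. }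
   lra. }
 set (W := 2 * Sn * KX).
 assert (HW : 0 <= W) by (unfold W, KX; nra).
 set (d := Rmin (s / 2) (Rmin (1 / (2 * Sn * KX * KA + 1)) (s / (2 * W + 1)))).
 assert (HKXKA : 0 <= Sn * KX * KA) by (unfold KX, KA; apply Rmult_le_pos; [apply Rmult_le_pos|]; lra).
 assert (Hd : 0 < d).
 { unfold d. apply Rmin_glb_lt. lra. apply Rmin_glb_lt; apply Rdiv_lt_0_compat; lra. }
 destruct (Happ d Hd) as [t [Ht [Ht0 [v [Hv1 Hv2]]]]].
 assert (Hd1 : d <= s / 2) by apply Rmin_l.
 assert (Hd2 : d <= 1 / (2 * Sn * KX * KA + 1)) by (eapply Rle_trans; [apply Rmin_r| apply Rmin_l]).
 assert (Hd3 : d <= s / (2 * W + 1)) by (eapply Rle_trans; [apply Rmin_r| apply Rmin_r]).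
 assert (Htpos : 0 < t) by lra.
 destruct (Hinv t ltac:(lra)) as [Xt HXt].
 set (w := fun i => fsum n (fun k => Xt i k)).
 assert (Hw : forall i, (i < n)%nat -> w i - t * mv n A w i = 1) by (apply inv_solve; auto).
 assert (Hwpos : forall i, (i < n)%nat -> 0 < w i) by (apply (solve_pos t v w); auto).
 assert (Hmvw : forall i, (i < n)%nat -> 0 <= mv n A w i) by (apply mv_nonneg; intros; apply Rlt_le; auto).
 set (S := fsum n w).
 assert (HmvS : forall m, (m < n)%nat -> mv n A w m <= KA * S).
 { intros m Hm. unfold S, mv. rewrite <- fsum_scal. apply fsum_le. intros l Hl.
   specialize (HAle m l Hm Hl). specialize (Hwpos l Hl). nra. }
 assert (Hwi : forall i, (i < n)%nat -> w i <= KX * (1 + (s - t) * (KA * S))).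
 { intros i Hi. rewrite (inv_repr s X HX w i Hi).
   eapply Rle_trans with (fsum n (fun m => Rabs (X i m) * (1 + (s - t) * (KA * S)))).
   - apply fsum_le. intros m Hm.
     assert (E : w m - s * mv n A w m = 1 + (t - s) * mv n A w m).
     { specialize (Hw m Hm). lra. }
     rewrite E. specialize (Hmvw m Hm). specialize (HmvS m Hm).
     assert (Hab : Rabs (1 + (t - s) * mv n A w m) <= 1 + (s - t) * (KA * S)).
     { eapply Rle_trans. apply Rabs_triang. rewrite Rabs_R1, Rabs_mult.
       rewrite (Rabs_left1 (t - s)) by lra. rewrite (Rabs_right (mv n A w m)) by lra. nra. }
     eapply Rle_trans. apply Rle_abs. rewrite Rabs_mult.
     apply Rmult_le_compat_l. apply Rabs_pos. auto.
   - rewrite (fsum_ext n _ (fun m => (1 + (s - t) * (KA * S)) * Rabs (X i m))) by (intros; ring).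
     rewrite fsum_scal. specialize (HrowX i Hi).
     assert (0 <= S) by (apply fsum_nonneg; intros; apply Rlt_le; auto).
     assert (0 <= KA * S) by (apply Rmult_le_pos; unfold KA; lra).
     assert (0 <= (s - t) * (KA * S)) by (apply Rmult_le_pos; lra).
     rewrite (Rmult_comm KX). apply Rmult_le_compat_l; lra. }
 assert (HS : S <= W).
 { assert (S <= Sn * (KX * (1 + (s - t) * (KA * S)))).
   { unfold S, Sn. rewrite <- fsum_const. apply fsum_le. auto. }
   assert (Hst : (s - t) * (2 * Sn * KX * KA + 1) <= 1).
   { apply le_div_mul. lra. lra. }
   assert (0 <= S) by (apply fsum_nonneg; intros; apply Rlt_le; auto).
   unfold W. nra. }
 exists w. split; auto. intros i Hi.
 assert (Hwi2 : w i <= W).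
 { eapply Rle_trans; [| apply HS]. unfold S. apply (fsum_term_le n w i); auto. intros; apply Rlt_le; auto. }
 assert (Hst2 : (s - t) * W < s).
 { assert (s - t < s / (2 * W + 1)) by lra.
   apply lt_div_mul in H; [|lra]. nra. }
 specialize (Hw i Hi). specialize (Hwpos i Hi).
 apply (Rmult_lt_reg_l t); auto.
 assert (E2 : t * (s * mv n A w i) = s * (w i - 1)) by (rewrite <- Hw; ring).
 rewrite E2. nra.
Qed.

Lemma perron : 0 <= beta -> exists t', beta < t' /\ good t'.
Proof. intros Hb.
 set (E := fun t => 0 <= t <= beta /\ good t).
 destruct (completeness E) as [s [Hub Hlub]].
 { exists beta. intros t [Ht _]. lra. }
 { exists 0. split. lra. apply good0. }
 assert (Hs0 : 0 <= s) by (apply Hub; split; [lra| apply good0]).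
 assert (Hsb : s <= beta) by (apply Hlub; intros t [Ht _]; lra).
 assert (Hgs : good s).
 { destruct (Req_dec s 0) as [->|Hne]. apply good0.
   apply good_closed. lra. intros eps Heps.
   apply NNPP. intros Hno. assert (s <= s - eps); [|lra].
   apply Hlub. intros t [Ht Hg]. destruct (Rle_lt_dec t (s - eps)) as [|Hlt]; auto.
   exfalso. apply Hno. exists t. split; [split|split]; auto; try lra. apply Hub. split; auto. }
 destruct (Rle_lt_dec beta s) as [Hbs|Hbs].
 - assert (s = beta) by lra. subst s. destruct (good_open beta Hb Hgs) as [d [Hd Hg]].
   exists (beta + d). split; auto. lra.
 - exfalso. destruct (good_open s Hs0 Hgs) as [d [Hd Hg]].
   set (t0 := Rmin (s + d) beta).
   assert (s < t0) by (unfold t0; apply Rmin_glb_lt; lra).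
   assert (t0 <= beta) by apply Rmin_r.
   assert (t0 <= s + d) by apply Rmin_l.
   assert (E t0). { split. lra. apply (good_down (s + d)); auto. lra. }
   assert (t0 <= s) by (apply Hub; auto). lra.
Qed.
End Perron.

From Stdlib Require Import ClassicalEpsilon.

Lemma mmul_nonneg n M N : (forall i j, (i < n)%nat -> (j < n)%nat -> 0 <= M i j) ->
  (forall i j, (i < n)%nat -> (j < n)%nat -> 0 <= N i j) ->
  forall i j, (i < n)%nat -> (j < n)%nat -> 0 <= mmul n M N i j.
Proof. intros HM HN i j Hi Hj. apply fsum_nonneg. intros k Hk. apply Rmult_le_pos; auto. Qed.

Lemma mpow_nonneg n M k : (forall i j, (i < n)%nat -> (j < n)%nat -> 0 <= M i j) ->
  forall i j, (i < n)%nat -> (j < n)%nat -> 0 <= mpow n M k i j.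
Proof. intros HM. induction k; simpl; intros i j Hi Hj.
 - unfold mid. destruct (Nat.eqb i j); lra.
 - apply mmul_nonneg; auto. Qed.

Lemma pow_le_one x k : 0 <= x <= 1 -> x ^ k <= 1.
Proof. intros H. rewrite <- (pow1 k). apply pow_incr. lra. Qed.

Lemma ser_plus (a b : nat -> R) (la lb : R) : is_series a la -> is_series b lb ->
  is_series (fun k => a k + b k) (la + lb).
Proof. intros H1 H2. apply (is_series_plus a b la lb H1 H2). Qed.
Lemma ser_minus (a b : nat -> R) (la lb : R) : is_series a la -> is_series b lb ->
  is_series (fun k => a k - b k) (la - lb).
Proof. intros H1 H2. apply (is_series_minus a b la lb H1 H2). Qed.
Lemma ser_scal (c : R) (a : nat -> R) (la : R) : is_series a la -> is_series (fun k => c * a k) (c * la).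
Proof. intros H1. apply (is_series_scal c a la H1). Qed.
Lemma ser_ext (a b : nat -> R) (l : R) : (forall k, a k = b k) -> is_series a l -> is_series b l.
Proof. apply is_series_ext. Qed.
Lemma ser_zero : is_series (fun _ : nat => 0) 0.
Proof. assert (H : is_series (fun k => 0 * 0 ^ k) (0 * / (1 - 0))).
 { apply ser_scal. apply is_series_geom. rewrite Rabs_R0; lra. }
 replace (0 * / (1 - 0)) with 0 in H by ring. apply (ser_ext _ _ _ (fun k => Rmult_0_l _) H). Qed.
Lemma ser_incr (a : nat -> R) (l : R) : is_series a l -> is_series (fun k => a (S k)) (l - a 0%nat).
Proof. intros H. apply is_series_incr_1.
 assert (E : l = plus (l - a 0%nat) (a 0%nat)) by (unfold plus; simpl; ring).
 rewrite E in H. exact H. Qed.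
Lemma ser_le (a b : nat -> R) (la lb : R) : is_series a la -> is_series b lb -> (forall k, a k <= b k) -> la <= lb.
Proof. intros H1 H2 H.
 assert (H3 : is_series (fun k => b k - a k) (lb - la)) by (apply ser_minus; auto).
 assert (H4 : Series (fun _ => 0) <= Series (fun k => b k - a k)).
 { apply Series_le. intros k; specialize (H k); lra. eexists; eauto. }
 rewrite (is_series_unique _ _ ser_zero) in H4. rewrite (is_series_unique _ _ H3) in H4. lra. Qed.
Lemma ser_fsum n (F : nat -> nat -> R) (L : nat -> R) :
  (forall l, (l < n)%nat -> is_series (F l) (L l)) ->
  is_series (fun k => fsum n (fun l => F l k)) (fsum n L).
Proof. induction n; intros H; simpl.
 - apply ser_zero.
 - apply ser_plus. apply IHn. intros; apply H; lia. apply H; lia. Qed.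
Lemma ser_cmp (a b : nat -> R) : (forall k, 0 <= a k <= b k) -> ex_series b -> ex_series a.
Proof. intros H Hb. apply (ex_series_le a b); auto. intros k. specialize (H k).
 change (norm (a k)) with (Rabs (a k)). rewrite Rabs_right; lra. Qed.
Lemma ser_geom (C q : R) : 0 <= q < 1 -> ex_series (fun k => C * q ^ k).
Proof. intros Hq. eexists. apply ser_scal. apply is_series_geom. rewrite Rabs_right; lra. Qed.

Section MainSec.
Variable n : nat.
Variable A Z : mat.
Variable beta : R.
Variable d : vec.
Variable g : nat.
Hypothesis Hg : (g < n)%nat.
Hypothesis HA : forall i j, (i < n)%nat -> (j < n)%nat -> 0 <= A i j.
Hypothesis HZ : forall i j, (i < n)%nat -> (j < n)%nat -> 0 <= Z i j.
Hypothesis Hd : forall i, (i < n)%nat -> 0 <= d i.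
Hypothesis Hb0 : 0 <= beta.
Hypothesis Hinj : forall t, 0 <= t <= beta -> forall u : vec,
  (forall i, (i < n)%nat -> u i - t * mv n A u i = 0) -> forall i, (i < n)%nat -> u i = 0.

Lemma Hinv t : 0 <= t <= beta -> exists X, is_minv n (fun i j => mid i j - t * A i j) X.
Proof. intros Ht. apply BridgeM.inv_exists. intros u Hu. apply (Hinj t Ht u).
 intros i Hi. rewrite <- (Hu i Hi). symmetry. apply mv_IA; auto. Qed.

Definition pp (k : nat) (i : nat) : R := mmul n (mpow n A k) Z i g.

Lemma pp_S k i : (i < n)%nat -> pp (S k) i = mv n A (pp k) i.
Proof. intros Hi. unfold pp, mv. simpl. unfold mmul at 1. unfold mmul at 1.
 rewrite (fsum_ext n _ (fun l => fsum n (fun m => A i m * (mpow n A k m l * Z l g)))).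
 2:{ intros l Hl. rewrite Rmult_comm, <- fsum_scal. apply fsum_ext. intros; ring. }
 rewrite fsum_swap. apply fsum_ext. intros m Hm. unfold mmul. rewrite <- fsum_scal. reflexivity. Qed.

Lemma pp_0 i : (i < n)%nat -> pp 0 i = Z i g.
Proof. intros Hi. unfold pp. simpl. unfold mmul. apply (fsum_mid n i (fun k => Z k g)); auto. Qed.

Lemma pp_nonneg k i : (i < n)%nat -> 0 <= pp k i.
Proof. intros Hi. unfold pp. apply mmul_nonneg; auto. intros; apply mpow_nonneg; auto. Qed.

Variable tp : R.
Variable v : vec.
Hypothesis Htp : beta < tp.
Hypothesis Hv1 : forall i, (i < n)%nat -> 0 < v i.
Hypothesis Hv2 : forall i, (i < n)%nat -> tp * mv n A v i < v i.

Lemma pp_bound : exists C, 0 <= C /\ forall k i, (i < n)%nat -> pp k i <= C * (/ tp) ^ k * v i.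
Proof.
 destruct (fin_max n (fun i => Z i g / v i)) as [C0 HC0].
 exists (Rmax C0 0). split. apply Rmax_r.
 assert (Htp0 : 0 < tp) by lra.
 induction k; intros i Hi.
 - rewrite pp_0 by auto. simpl. specialize (HC0 i Hi). specialize (Hv1 i Hi).
   assert (Z i g / v i <= Rmax C0 0) by (eapply Rle_trans; [apply HC0| apply Rmax_l]).
   apply Rmult_le_compat_r with (r := v i) in H; [|lra].
   replace (Z i g / v i * v i) with (Z i g) in H by (field; lra). lra.
 - rewrite pp_S by auto.
   apply Rle_trans with (Rmax C0 0 * (/ tp) ^ k * mv n A v i).
   + unfold mv. rewrite <- fsum_scal. apply fsum_le. intros l Hl.
     specialize (IHk l Hl). specialize (HA i l Hi Hl). nra.
   + simpl. specialize (Hv2 i Hi). assert (0 <= Rmax C0 0) by apply Rmax_r.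
     assert (0 <= (/ tp) ^ k) by (apply pow_le; apply Rlt_le, Rinv_0_lt_compat; auto).
     assert (Hm : mv n A v i <= / tp * v i).
     { apply (Rmult_le_reg_l tp); auto. rewrite <- Rmult_assoc, Rinv_r by lra. lra. }
     replace (Rmax C0 0 * (/ tp * (/ tp) ^ k) * v i) with (Rmax C0 0 * (/ tp) ^ k * (/ tp * v i)) by ring.
     apply Rmult_le_compat_l; auto. apply Rmult_le_pos; auto.
Qed.

Lemma ratio_lt b : 0 <= b <= beta -> 0 <= b * / tp < 1.
Proof. intros Hb. assert (0 < tp) by lra. split.
 apply Rmult_le_pos; [lra| apply Rlt_le, Rinv_0_lt_compat; auto].
 apply (Rmult_lt_reg_r tp); auto. rewrite Rmult_assoc, Rinv_l by lra. lra. Qed.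

Lemma pp_dom b : 0 <= b <= beta -> exists C, 0 <= C /\ forall k i, (i < n)%nat ->
  0 <= b ^ k * pp k i <= C * v i * (b * / tp) ^ k.
Proof. intros Hb. destruct pp_bound as [C [HC HCb]]. exists C. split; auto. intros k i Hi.
 split. apply Rmult_le_pos. apply pow_le; lra. apply pp_nonneg; auto.
 rewrite Rpow_mult_distr. specialize (HCb k i Hi).
 assert (0 <= b ^ k) by (apply pow_le; lra).
 replace (C * v i * (b ^ k * (/ tp) ^ k)) with (b ^ k * (C * (/ tp) ^ k * v i)) by ring.
 apply Rmult_le_compat_l; auto. Qed.

Lemma pp_ex b i : 0 <= b <= beta -> (i < n)%nat -> ex_series (fun k => b ^ k * pp k i).
Proof. intros Hb Hi. destruct (pp_dom b Hb) as [C [HC HCb]].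
 apply (ser_cmp _ (fun k => C * v i * (b * / tp) ^ k)).
 intros k; apply HCb; auto. apply ser_geom. apply ratio_lt; auto. Qed.

Definition ss b i := Series (fun k => b ^ k * pp k i).

Lemma ss_correct b i : 0 <= b <= beta -> (i < n)%nat -> is_series (fun k => b ^ k * pp k i) (ss b i).
Proof. intros. apply Series_correct. apply pp_ex; auto. Qed.

Lemma ss_eq b i : 0 <= b <= beta -> (i < n)%nat -> ss b i - b * mv n A (ss b) i = Z i g.
Proof. intros Hb Hi.
 assert (H1 : is_series (fun k => b ^ k * pp (S k) i) (mv n A (ss b) i)).
 { apply (ser_ext (fun k => fsum n (fun l => A i l * (b ^ k * pp k l)))).
   - intros k. rewrite pp_S by auto. unfold mv. rewrite <- fsum_scal. apply fsum_ext. intros; ring.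
   - unfold mv. apply ser_fsum. intros l Hl. apply ser_scal. apply ss_correct; auto. }
 assert (H2 : is_series (fun k => b ^ (S k) * pp (S k) i) (ss b i - (b ^ 0 * pp 0 i))).
 { apply (ser_incr (fun k => b ^ k * pp k i)).
   apply ss_correct; auto. }
 apply ser_scal with (c := b) in H1.
 assert (H3 : is_series (fun k => b ^ (S k) * pp (S k) i) (b * mv n A (ss b) i)).
 { revert H1. apply ser_ext. intros k; simpl; ring. }
 assert (E : ss b i - b ^ 0 * pp 0 i = b * mv n A (ss b) i).
 { rewrite <- (is_series_unique _ _ H2). apply is_series_unique; auto. }
 rewrite pp_0 in E by auto. simpl in E. lra. Qed.

Definition ff k := fsum n (fun i => d i * pp k i).

Lemma ff_nonneg k : 0 <= ff k.
Proof. apply fsum_nonneg. intros i Hi. apply Rmult_le_pos; auto. apply pp_nonneg; auto. Qed.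

Definition GG b := fsum n (fun i => d i * ss b i).

Lemma GG_series b : 0 <= b <= beta -> is_series (fun k => b ^ k * ff k) (GG b).
Proof. intros Hb. apply (ser_ext (fun k => fsum n (fun i => d i * (b ^ k * pp k i)))).
 - intros k. unfold ff. rewrite <- fsum_scal. apply fsum_ext. intros; ring.
 - apply ser_fsum. intros l Hl. apply ser_scal. apply ss_correct; auto. Qed.

Lemma GG_gtilde b : 0 <= b <= beta ->
  GG b = dTMdelta n d (mmul n (minv n (msub mid (mscale b A))) Z) g.
Proof. intros Hb.
 assert (HY : is_minv n (msub mid (mscale b A)) (minv n (msub mid (mscale b A)))).
 { unfold minv. apply epsilon_spec. apply Hinv; auto. }
 unfold GG, dTMdelta. apply fsum_ext. intros i Hi. f_equal.
 rewrite (inv_repr n A b _ HY (ss b) i Hi). unfold mmul. apply fsum_ext. intros m Hm.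
 rewrite ss_eq; auto. Qed.

Lemma GGt_series b theta : 0 <= b <= beta ->
  is_series (fun k => b ^ (theta + k) * ff k) (b ^ theta * GG b).
Proof. intros Hb. apply (ser_ext (fun k => b ^ theta * (b ^ k * ff k))).
 intros k. rewrite pow_add. ring. apply ser_scal. apply GG_series; auto. Qed.
End MainSec.

Lemma Hbound abar a c Mbar B w theta y : 0 < abar ^ 2 < c ^ 2 -> c ^ 2 < 1 -> 0 < B -> 0 <= y ->
  (theta <= w)%nat ->
  Hfun abar a c Mbar B w y <= ((abar ^ 2) ^ w - (c ^ 2) ^ w) * (B / c ^ (2 * theta))
     + Mbar * ((a ^ 2) ^ w - 1 ^ w).
Proof. intros H1 H2 HB Hy Hw. unfold Hfun. rewrite !pow_mult, pow1.
 set (al := (abar ^ 2) ^ w). set (ga := (c ^ 2) ^ w). set (ka := (c ^ 2) ^ theta).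
 assert (Hal : 0 <= al <= ga) by (split; [apply pow_le; lra| apply pow_incr; lra]).
 assert (Hga : 0 < ga) by (apply pow_lt; lra).
 assert (Hgk : ga <= ka).
 { unfold ga, ka. replace w with (theta + (w - theta))%nat by lia. rewrite pow_add.
   assert (0 < (c ^ 2) ^ theta) by (apply pow_lt; lra).
   assert ((c ^ 2) ^ (w - theta) <= 1) by (apply pow_le_one; lra). nra. }
 assert (Hinv1 : B / ka <= B / ga).
 { unfold Rdiv. apply Rmult_le_compat_l. lra. apply Rinv_le_contravar; lra. }
 assert (HBg : B / ga * ga = B) by (field; lra).
 cut (al * y - Rmax (ga * y) B <= (al - ga) * (B / ka)). { intros; lra. }
 unfold Rmax. destruct (Rle_dec (ga * y) B) as [Hle|Hgt].
 - assert (y <= B / ga).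
   { apply (Rmult_le_reg_r ga); auto. lra. }
   assert (al * y <= al * (B / ga)) by (apply Rmult_le_compat_l; lra).
   assert (al * (B / ga) - B = (al - ga) * (B / ga)) by (field; lra).
   assert ((al - ga) * (B / ga) <= (al - ga) * (B / ka)) by (apply Rmult_le_compat_neg_l; lra).
   lra.
 - assert (B / ga <= y).
   { apply (Rmult_le_reg_r ga); auto. lra. }
   assert ((al - ga) * y <= (al - ga) * (B / ka)) by (apply Rmult_le_compat_neg_l; lra).
   lra.
Qed.

Theorem mainTheorem4
  (a L abar c M B Mbar : R) (n : nat) (P0 P1 : mat) (e : vec)
  (Ha : 1 < Rabs a) (Habar : abar = a + L)
  (Habar2 : 0 < abar ^ 2 < 1) (Hc : abar ^ 2 < c ^ 2 < 1)
  (HM : 0 < M) (HB : 0 < B) (HMbar : Mbar = M / (a ^ 2 - 1))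
  (Hn : (1 <= n)%nat)
  (HP0 : col_stochastic n P0) (HP1 : col_stochastic n P1)
  (He : forall i, (i < n)%nat -> 0 <= e i <= 1)
  (Hrho : forall re im, ceigen n (mmul n P1 (mdiag e)) re im ->
            a ^ 2 * sqrt (re ^ 2 + im ^ 2) < 1) :
  forall (theta : nat) (g : nat) (x : R),
    (1 <= theta)%nat -> (g < n)%nat ->
    exists J : R,
      infinite_sum (Jterm n abar a c Mbar B P0 P1 e theta (x ^ 2) g) J /\
      J <= (gtilde n P0 P1 e theta (abar ^ 2) g - gtilde n P0 P1 e theta (c ^ 2) g)
             * (B / c ^ (2 * theta))
           + Mbar * (gtilde n P0 P1 e theta (a ^ 2) g - gtilde n P0 P1 e theta 1 g).
Proof.
 intros theta g x Hth Hg.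
 set (A := mmul n P1 (mdiag e)).
 set (Z := mmul n (mpow n P0 (theta - 1)) P1).
 set (d := fun i => 1 - e i).
 assert (Hbeta : 1 < (a ^ 2)).
 { rewrite <- (pow2_abs a). nra. }
 destruct HP0 as [HP0a _]. destruct HP1 as [HP1a _].
 assert (HA : forall i j, (i < n)%nat -> (j < n)%nat -> 0 <= A i j).
 { apply mmul_nonneg; auto. intros i j Hi Hj. unfold mdiag. destruct (Nat.eqb i j).
   apply He; auto. lra. }
 assert (HZ : forall i j, (i < n)%nat -> (j < n)%nat -> 0 <= Z i j).
 { apply mmul_nonneg; auto. intros; apply mpow_nonneg; auto. }
 assert (Hd : forall i, (i < n)%nat -> 0 <= d i) by (intros i Hi; unfold d; specialize (He i Hi); lra).
 assert (Hinj : forall t, 0 <= t <= (a ^ 2) -> forall u : vec,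
   (forall i, (i < n)%nat -> u i - t * mv n A u i = 0) -> forall i, (i < n)%nat -> u i = 0).
 { intros t Ht u Hu i Hi. apply NNPP. intros Hne.
   destruct (Req_dec t 0) as [->|Htn].
   { specialize (Hu i Hi). apply Hne. lra. }
   assert (Hce : ceigen n A (/ t) 0).
   { exists u, (fun _ => 0). split. exists i. split; auto.
     intros j Hj. split.
     - specialize (Hu j Hj). unfold mv in Hu. field_simplify; auto.
       apply (Rmult_eq_reg_l t); auto. field_simplify; auto. lra.
     - rewrite (fsum_ext n _ (fun _ => 0)) by (intros; ring). rewrite fsum_zero. ring. }
   specialize (Hrho _ _ Hce).
   replace ((/ t) ^ 2 + 0 ^ 2) with ((/ t) ^ 2) in Hrho by ring.
   assert (Ht0 : 0 < t) by lra.
   rewrite sqrt_pow2 in Hrho by (apply Rlt_le, Rinv_0_lt_compat; auto).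
      apply (Rmult_lt_compat_r t) in Hrho; auto. rewrite Rmult_assoc, Rinv_l in Hrho by lra. lra. }
 destruct (perron n A (a ^ 2) HA (Hinv n A (a ^ 2) Hinj) ltac:(lra)) as [tp [Htp [v [Hv1 Hv2]]]].
 set (y := x ^ 2).
 assert (Hy : 0 <= y) by (unfold y; nra).
 assert (Hc0 : 0 < c ^ 2) by lra.
 set (f := ff n A Z d g).
 assert (Hf : forall k, 0 <= f k) by (apply ff_nonneg; auto).
 assert (HS : forall b, 0 <= b <= (a ^ 2) ->
   is_series (fun k => b ^ (theta + k) * f k) (b ^ theta * GG n A Z d g b)).
 { intros b Hb. apply (GGt_series n A Z (a ^ 2) d g Hg HA HZ ltac:(lra) tp v Htp Hv1 Hv2 b theta Hb). }
 assert (Hgt : forall b, 0 <= b <= (a ^ 2) ->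
   gtilde n P0 P1 e theta b g = b ^ theta * GG n A Z d g b).
 { intros b Hb. unfold gtilde. cbv zeta. f_equal. symmetry.
   apply (GG_gtilde n A Z (a ^ 2) d g Hg HA HZ ltac:(lra) Hinj tp v Htp Hv1 Hv2 b Hb). }
 assert (Hb1 : 0 <= abar ^ 2 <= (a ^ 2)) by lra.
 assert (Hb2 : 0 <= c ^ 2 <= (a ^ 2)) by lra.
 assert (Hb3 : 0 <= a ^ 2 <= (a ^ 2)) by lra.
 assert (Hb4 : 0 <= 1 <= (a ^ 2)) by lra.
 rewrite (Hgt _ Hb1), (Hgt _ Hb2), (Hgt _ Hb3), (Hgt _ Hb4).
 set (S1 := (abar ^ 2) ^ theta * GG n A Z d g (abar ^ 2)) in *.
 set (Sc := (c ^ 2) ^ theta * GG n A Z d g (c ^ 2)) in *.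
 set (S2 := (a ^ 2) ^ theta * GG n A Z d g (a ^ 2)) in *.
 set (S0 := 1 ^ theta * GG n A Z d g 1) in *.
 assert (H1 := HS _ Hb1). assert (Hc' := HS _ Hb2). assert (H2 := HS _ Hb3). assert (H0 := HS _ Hb4).
 set (R3 := fun k => Rmax ((c ^ 2) ^ (theta + k) * y) B * f k).
 assert (HR3 : ex_series R3).
 { apply (ser_cmp _ (fun k => y * ((c ^ 2) ^ (theta + k) * f k) + B * (1 ^ (theta + k) * f k))).
   - intros k. unfold R3. rewrite pow1. specialize (Hf k).
     assert (0 <= (c ^ 2) ^ (theta + k)) by (apply pow_le; lra).
     assert (0 <= Rmax ((c ^ 2) ^ (theta + k) * y) B) by (eapply Rle_trans; [|apply Rmax_r]; lra).
     assert (Rmax ((c ^ 2) ^ (theta + k) * y) B <= (c ^ 2) ^ (theta + k) * y + B).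
     { apply Rmax_lub; nra. }
     split. nra. nra.
   - eexists. apply ser_plus; apply ser_scal; eauto. }
 destruct HR3 as [L3 HL3].
 exists (y * S1 + Mbar * (S2 - S0) - L3). split.
 - apply is_series_Reals.
   apply (ser_ext (fun k => y * ((abar ^ 2) ^ (theta + k) * f k) +
            Mbar * ((a ^ 2) ^ (theta + k) * f k - 1 ^ (theta + k) * f k) - R3 k)).
   + intros k. unfold Jterm, R3, Hfun, f, ff, pp, dTMdelta. cbv zeta.
     rewrite !pow_mult, pow1. fold A. fold Z. unfold d. ring.
   + apply ser_minus; auto. apply ser_plus; apply ser_scal; auto. apply ser_minus; auto.
 - apply (ser_le (fun k => y * ((abar ^ 2) ^ (theta + k) * f k) +
            Mbar * ((a ^ 2) ^ (theta + k) * f k - 1 ^ (theta + k) * f k) - R3 k)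
           (fun k => ((abar ^ 2) ^ (theta + k) * f k - (c ^ 2) ^ (theta + k) * f k) * (B / c ^ (2 * theta))
              + Mbar * ((a ^ 2) ^ (theta + k) * f k - 1 ^ (theta + k) * f k))).
   + apply ser_minus; auto. apply ser_plus; apply ser_scal; auto. apply ser_minus; auto.
   + apply ser_plus. rewrite (Rmult_comm (S1 - Sc)).
     apply (ser_ext (fun k => (B / c ^ (2 * theta)) * ((abar ^ 2) ^ (theta + k) * f k - (c ^ 2) ^ (theta + k) * f k))).
     intros; ring. apply ser_scal. apply ser_minus; auto.
     apply ser_scal. apply ser_minus; auto.
   + intros k. unfold R3.
     pose proof (Hbound abar a c Mbar B (theta + k) theta y ltac:(lra) ltac:(lra) HB Hy ltac:(lia)) as Hk.
     unfold Hfun in Hk. rewrite !pow_mult, pow1 in Hk. rewrite pow1.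
     specialize (Hf k). 
     replace (((abar ^ 2) ^ (theta + k) * f k - (c ^ 2) ^ (theta + k) * f k) * (B / c ^ (2 * theta))
              + Mbar * ((a ^ 2) ^ (theta + k) * f k - 1 * f k))
       with ((((abar ^ 2) ^ (theta + k) - (c ^ 2) ^ (theta + k)) * (B / c ^ (2 * theta))
              + Mbar * ((a ^ 2) ^ (theta + k) - 1)) * f k) by ring.
     replace (y * ((abar ^ 2) ^ (theta + k) * f k) + Mbar * ((a ^ 2) ^ (theta + k) * f k - 1 * f k) -
              Rmax ((c ^ 2) ^ (theta + k) * y) B * f k)
       with (((abar ^ 2) ^ (theta + k) * y + Mbar * ((a ^ 2) ^ (theta + k) - 1) -
              Rmax ((c ^ 2) ^ (theta + k) * y) B) * f k) by ring.
     apply Rmult_le_compat_r; auto. rewrite pow_mult; exact Hk.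
Qed.
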